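(* For every finite abelian group $F$, the real linear span of the image of the correlation map satisfies \[\mathrm{span}_{\mathbb R}\big(A_F(G_F)\big)=\mathbb R^F_{\rm ev}:=\{h\in\mathbb R^F\mid h_{-f}=h_f\ \text{for all } f\in F\}.\]
   Context: Let $F$ be a finite abelian group, written additively, and $G_F=\{-1,1\}^F$. The correlation map $A_F:G_F\to\mathbb Z^F\subseteq\mathbb R^F$ is $A_F(\sigma)_f=\sum_{\ell\in F}\sigma_\ell\sigma_{\ell+f}$. *)

(* Defs.v *)
From HB Require Import structures.
From mathcomp Require Import all_boot all_order all_algebra.
From mathcomp Require Import reals.
Set Implicit Arguments. Unset Strict Implicit. Unset Printing Implicit Defensive.
Import Order.TTheory GRing.Theory Num.Theory.
Local Open Scope ring_scope.

(* An element of G_F = {-1,1}^F is encoded by s : {ffun F -> bool},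
   via spin s l = 1 if s l, -1 otherwise (a bijection bool <-> {-1,1}). *)
Definition spin (R : nzRingType) (F : finType) (s : {ffun F -> bool}) (l : F) : R :=
  if s l then 1 else -1.

Definition corr (R : nzRingType) (F : finZmodType) (s : {ffun F -> bool}) : {ffun F -> R^o} :=
  [ffun f => \sum_(l : F) spin R s l * spin R s (l + f)].

Definition corr_image (R : nzRingType) (F : finZmodType) : seq {ffun F -> R^o} :=
  [seq corr R s | s : {ffun F -> bool}].

Definition is_even_fun (R : nzRingType) (F : finZmodType) (h : {ffun F -> R^o}) : Prop :=
  forall f : F, h (- f) = h f.

(* Main.v *)
Require Import Defs.
From HB Require Import structures.
From mathcomp Require Import all_boot all_order all_algebra.
From mathcomp Require Import reals ring lra.
Import Order.TTheory GRing.Theory Num.Theory.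
Local Open Scope ring_scope.
Lemma corr_even (R : realType) (F : finZmodType) (s : {ffun F -> bool}) :
  is_even_fun (corr R s).
Proof.
move=> f; rewrite !ffunE (reindex_inj (addIr f)) /=.
by apply: eq_bigr => l _; rewrite addrK mulrC.
Qed.

Lemma dir1 (R : realType) (F : finZmodType) (h : {ffun F -> R^o}) :
  (h \in <<corr_image R F>>%VS) -> is_even_fun h.
Proof.
move=> H; have -> := coord_span (X := in_tuple (corr_image R F)) H.
move=> f; rewrite !sum_ffunE; apply: eq_bigr => i _; rewrite !ffunE.
congr (_ * _).
have := mem_nth 0 (ltn_ord i).
case/mapP => s _ ->; exact: corr_even.
Qed.
Section S.
Variables (R : realType) (F : finZmodType).
Definition sS (S : {set F}) : {ffun F -> bool} := [ffun l => l \notin S].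
Definition one : {ffun F -> R^o} := [ffun _ => 1].
Definition G (S : {set F}) : {ffun F -> R^o} :=
  [ffun f => \sum_l (l \in S)%:R * (l + f \in S)%:R].

Lemma sum_ind (S : {set F}) : \sum_(l : F) ((l \in S)%:R : R) = #|S|%:R.
Proof. by rewrite -[RHS](sumr_const (mem S)) [RHS]big_mkcond; apply: eq_bigr => l _; case: (l \in S). Qed.

Lemma corr_sS S : corr R (sS S) = (#|F|%:R - 4 * #|S|%:R) *: one + 4 *: G S.
Proof.
apply/ffunP => f; rewrite !ffunE.
have sp : forall l, spin R (sS S) l = 1 - 2 * (l \in S)%:R.
  by move=> l; rewrite /spin ffunE; case: (l \in S) => /=; rewrite ?mulr0 ?subr0 ?mulr1 //; lra.
under eq_bigr do rewrite !sp.
have e : forall l : F, (1 - 2 * (l \in S)%:R) * (1 - 2 * (l + f \in S)%:R) =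
   1 - 2 * (l \in S)%:R - 2 * (l + f \in S)%:R + 4 * ((l \in S)%:R * (l + f \in S)%:R) :> R.
  by move=> l; ring.
under eq_bigr do rewrite e.
rewrite !big_split /= !sumrN -!mulr_sumr sum_ind.
rewrite [X in _ - (_ * X) + _](reindex_inj (addIr (- f))) /=.
under [X in _ - (_ * X) + _]eq_bigr do rewrite subrK.
rewrite sum_ind sumr_const -[_%:A]/(_ * 1) -[4 *: _]/(4 * _) mulr1.
rewrite (_ : #|xpredT| = #|F|) //; ring.
Qed.
Definition W := <<corr_image R F>>%VS.
Definition v (D : F) : {ffun F -> R^o} := [ffun g => (g == D)%:R + (g == - D)%:R].

Lemma corr_in s : corr R s \in W.
Proof. by apply: memv_span; apply: map_f; rewrite mem_enum. Qed.

Lemma one_in : one \in W.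
Proof.
have := corr_in (sS set0); rewrite corr_sS cards0 mulr0 subr0.
have -> : G set0 = 0 by apply/ffunP => f; rewrite !ffunE big1 // => l _; rewrite in_set0 mul0r.
rewrite scaler0 addr0 => H.
have n0 : (#|F|%:R : R) != 0 by rewrite pnatr_eq0 -lt0n; apply/card_gt0P; exists 0.
by rewrite -[one](scalerK n0) memvZ.
Qed.

Lemma G_in S : G S \in W.
Proof.
have := corr_in (sS S); rewrite corr_sS => H.
have -> : G S = 4^-1 *: (corr R (sS S) - (#|F|%:R - 4 * #|S|%:R) *: one).
  by rewrite corr_sS [_ + 4 *: _]addrC addrK scalerA mulVf ?scale1r // pnatr_eq0.
by rewrite memvZ // memvB // ?memvZ ?corr_in ?one_in.
Qed.

Lemma G0 : G [set 0] = [ffun g => (g == 0)%:R].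
Proof.
apply/ffunP => f; rewrite !ffunE (bigD1 0) //= big1 ?addr0.
  by rewrite !in_set1 add0r eqxx mul1r.
by move=> l nl; rewrite in_set1 (negbTE nl) mul0r.
Qed.

Lemma GD D : D != 0 -> G [set 0; D] = v D + 2 *: [ffun g => (g == 0)%:R].
Proof.
move=> nD; apply/ffunP => g; rewrite !ffunE.
rewrite (bigD1 0) //= (bigD1 D) /=; last by rewrite nD.
rewrite big1 ?addr0; last first.
  by move=> l /andP[l0 lD]; rewrite !in_set2 (negbTE l0) (negbTE lD) mul0r.
have eDg : (D + g == D) = (g == 0) by rewrite -subr_eq0 [D + g]addrC addrK.
have eDg0 : (D + g == 0) = (g == - D) by rewrite addr_eq0 eq_sym eqr_oppLR.
rewrite !in_set2 !eqxx /= orbT eDg eDg0 add0r !mul1r -[2 *: _]/(2 * _).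
have nD' : - D != 0 by rewrite oppr_eq0.
case: (eqVneq g 0) => [->|g0]; first by rewrite eq_sym (negbTE nD) eq_sym (negbTE nD') /=; ring.
by rewrite orbF; case: (eqVneq g D) => [->|gD] /=; ring.
Qed.

Lemma v_in D : v D \in W.
Proof.
case: (eqVneq D 0) => [->|nD].
  have -> : v 0 = 2 *: G [set 0].
    by rewrite G0; apply/ffunP => g; rewrite !ffunE oppr0 /GRing.scale /=; ring.
  by rewrite memvZ // G_in.
have -> : v D = G [set 0; D] - 2 *: G [set 0] by rewrite GD // G0 addrK.
by rewrite memvB // ?memvZ // G_in.
Qed.

Lemma dir2 (h : {ffun F -> R^o}) : is_even_fun h -> h \in W.
Proof.
move=> he.
have -> : h = \sum_f (h f / 2) *: v f.
  apply/ffunP => g; rewrite sum_ffunE.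
  under eq_bigr do rewrite !ffunE.
  rewrite /GRing.scale /=.
  under eq_bigr do rewrite mulrDr.
  rewrite big_split /= (bigD1 g) //= big1 ?addr0; last first.
    by move=> f fg; rewrite eq_sym (negbTE fg) mulr0.
  rewrite (bigD1 (- g)) //= big1 ?addr0; last first.
    by move=> f fg; rewrite eq_sym eqr_oppLR (negbTE fg) mulr0.
  rewrite eqxx opprK eqxx he; rewrite (_ : true%:R = 1 :> R) //; field.
  by [].
by apply: memv_suml => f _; rewrite memvZ // v_in.
Qed.
End S.

Theorem mainTheorem3 (R : realType) (F : finZmodType) (h : {ffun F -> R^o}) :
  (h \in <<corr_image R F>>%VS) <-> is_even_fun h.
Proof.
split; first exact: dir1.
exact: dir2.
Qed.
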